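(* Let $\mathcal{H}=(V,E)$ be a linear hypergraph such that for every hyperedge $e\in E$ there exists a vertex $x\in e$ with $\mathrm{deg}_{\mathcal{H}}(x)\le |e|$. Then $$\mathrm{q}(\mathcal{H})\le \Delta([\mathcal{H}]_2)+1.$$
   Context: A hypergraph $\mathcal{H}=(V,E)$ has a finite vertex set $V$ and a finite set $E$ of nonempty subsets of $V$ (hyperedges). It is linear if $|e\cap e'|\le 1$ for all distinct $e,e'\in E$. The degree $\mathrm{deg}_{\mathcal{H}}(x)$ of a vertex $x$ is the number of hyperedges containing $x$. The 2-section $[\mathcal{H}]_2$ is the simple graph on $V$ in which two distinct vertices are adjacent iff some hyperedge contains both; $\Delta([\mathcal{H}]_2)$ is its maximum degree. The chromatic index $\mathrm{q}(\mathcal{H})$ is the least $k$ such that the hyperedges can be colored with $k$ colors so that any two distinct intersecting hyperedges receive different colors. *)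

(* Defs.v *)
From mathcomp Require Import all_boot.
Set Implicit Arguments. Unset Strict Implicit. Unset Printing Implicit Defensive.

Definition hypergraph (V : finType) (E : {set {set V}}) : Prop :=
  forall e, e \in E -> e != set0.

Definition linear (V : finType) (E : {set {set V}}) : Prop :=
  forall e e', e \in E -> e' \in E -> e != e' -> #|e :&: e'| <= 1.

Definition hdeg (V : finType) (E : {set {set V}}) (x : V) : nat :=
  #|[set e in E | x \in e]|.

Definition sec2_nbhd (V : finType) (E : {set {set V}}) (x : V) : {set V} :=
  [set y | (y != x) && [exists e in E, (x \in e) && (y \in e)]].

(* maximum degree of the 2-section (0 if V is empty) *)
Definition sec2_maxdeg (V : finType) (E : {set {set V}}) : nat :=
  \max_(x : V) #|sec2_nbhd E x|.

(* boolean version: a colouring {set V} -> 'I_k (values off E are irrelevant) *)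
Definition colorableb (V : finType) (E : {set {set V}}) (k : nat) : bool :=
  [exists c : {ffun {set V} -> 'I_k},
     [forall e in E, forall e' in E,
        (e != e') ==> (e :&: e' != set0) ==> (c e != c e')]].

Lemma colorable_ex (V : finType) (E : {set {set V}}) :
  exists k, colorableb E k.
Proof.
exists #|{set V}|; apply/existsP; exists [ffun e => enum_rank e].
apply/forallP => e; apply/implyP => _; apply/forallP => e'; apply/implyP => _.
apply/implyP => ne; apply/implyP => _; rewrite !ffunE.
by apply: contra ne => /eqP /enum_rank_inj ->.
Qed.

Definition chromatic_index (V : finType) (E : {set {set V}}) : nat :=
  ex_minn (colorable_ex E).

(* Main.v *)
Require Import Defs.
From mathcomp Require Import all_boot.
From mathcomp Require Import zify.
Set Implicit Arguments. Unset Strict Implicit. Unset Printing Implicit Defensive.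

Lemma card_bigcup_le (I T : finType) (P : {set I}) (F : I -> {set T}) :
  #|\bigcup_(i in P) F i| <= \sum_(i in P) #|F i|.
Proof.
elim/big_rec2: _ => [|i n U _ le]; first by rewrite cards0.
by rewrite (leq_trans (leq_card_setU _ U).1) ?leq_add2l.
Qed.

Lemma card_bigcup_disj (I T : finType) n (P : {set I}) (F : I -> {set T}) :
  #|P| <= n ->
  {in P &, forall i j, i != j -> [disjoint F i & F j]} ->
  #|\bigcup_(i in P) F i| = \sum_(i in P) #|F i|.
Proof.
elim: n P => [|n IH] P hP disj.
  move: hP; rewrite leqn0 cards_eq0 => /eqP ->.
  by rewrite !big_set0 cards0.
case: (set_0Vmem P) => [->|[i iP]]; first by rewrite !big_set0 cards0.
rewrite (big_setD1 _ iP) (big_setD1 _ iP) /=.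
have hP' : #|P :\ i| <= n by move: hP; rewrite (cardsD1 i P) iP.
rewrite -IH //; last first.
  by move=> a b; rewrite !inE => /andP[_ aP] /andP[_ bP]; apply: disj.
have := leq_card_setU (F i) (\bigcup_(j in P :\ i) F j).
move=> [_]; rewrite bigcup_disjoint; first by move/eqP.
move=> j; rewrite !inE => /andP[ji jP]; apply: disj => //.
by rewrite eq_sym.
Qed.

Definition star (V : finType) (E : {set {set V}}) (y : V) := [set f in E | y \in f].

Lemma nbhd_lower (V : finType) (E : {set {set V}}) (y : V) s :
  linear E -> (forall f, f \in E -> s <= #|f|) ->
  s.-1 * hdeg E y <= #|sec2_nbhd E y|.
Proof.
move=> lin hs.
have sub: \bigcup_(f in star E y) (f :\ y) \subset sec2_nbhd E y.
  apply/subsetP => z /bigcupP [f]; rewrite /star inE => /andP[fE yf].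
  rewrite !inE => /andP[zy zf]; rewrite zy /=.
  by apply/existsP; exists f; rewrite fE yf zf.
rewrite (leq_trans _ (subset_leq_card sub)) // (card_bigcup_disj (n := #|star E y|)) //.
  rewrite mulnC /hdeg -/(star E y) -sum_nat_const; apply: leq_sum => f.
  rewrite /star inE => /andP[fE yf]; have := hs f fE.
  rewrite (cardsD1 y f) yf /=; lia.
move=> f f'; rewrite /star !inE => /andP[fE yf] /andP[f'E yf'] ne.
rewrite disjoints_subset; apply/subsetP => z; rewrite !inE => /andP[zy zf]; apply/negP => /andP[_ zf'].
have : [set y; z] \subset f :&: f'.
  by apply/subsetP => w; rewrite !inE => /orP[] /eqP ->; rewrite ?yf ?yf' ?zf ?zf'.
move/subset_leq_card; rewrite cards2 eq_sym zy => h.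
by have := lin f f' fE f'E ne; rewrite leqNgt => /negP; apply.
Qed.

Lemma nb_upper (V : finType) (E : {set {set V}}) e :
  e \in E ->
  #|[set f in E | (f != e) && (f :&: e != set0)]| <= \sum_(y in e) (hdeg E y).-1.
Proof.
move=> eE.
have sub : [set f in E | (f != e) && (f :&: e != set0)] \subset
           \bigcup_(y in e) (star E y :\ e).
  apply/subsetP => f; rewrite inE => /and3P[fE fe /set0Pn [y]].
  rewrite inE => /andP[yf ye]; apply/bigcupP; exists y => //.
  by rewrite /star !inE fe fE yf.
rewrite (leq_trans (subset_leq_card sub)) // (leq_trans (card_bigcup_le _ _)) //.
apply: leq_sum => y ye; rewrite /hdeg -/(star E y) (cardsD1 e (star E y)).
by rewrite /star inE eE ye.
Qed.

Lemma hdeg_pos (V : finType) (E : {set {set V}}) e y :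
  e \in E -> y \in e -> 0 < hdeg E y.
Proof. by move=> eE ye; apply/card_gt0P; exists e; rewrite inE eE ye. Qed.

Lemma key_bound (V : finType) (E : {set {set V}}) e x :
  linear E -> e \in E -> (forall f, f \in E -> #|e| <= #|f|) ->
  x \in e -> hdeg E x <= #|e| ->
  #|[set f in E | (f != e) && (f :&: e != set0)]| <= sec2_maxdeg E.
Proof.
move=> lin eE emin xe hx.
set s := #|e|; set D := sec2_maxdeg E.
have hy y : y \in e -> s.-1 * hdeg E y <= D.
  move=> ye; apply: leq_trans (nbhd_lower y lin emin) _.
  by rewrite /D /sec2_maxdeg (bigD1 y) //= leq_maxl.
apply: leq_trans (nb_upper eE) _.
rewrite (big_setD1 _ xe) /=.
have hx0 := hdeg_pos eE xe.
have hxD := hy x xe.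
have cex : #|e :\ x| = s.-1 by rewrite /s (cardsD1 x e) xe.
case: (leqP s 1) => s1.
  have -> : e :\ x = set0 by apply/eqP; rewrite -cards_eq0 cex; lia.
  rewrite big_set0; lia.
have hsum : \sum_(y in e :\ x) (hdeg E y).-1 <= D - s.-1.
  rewrite -(@leq_pmul2l s.-1); last lia.
  rewrite big_distrr /=; apply: (@leq_trans (\sum_(y in e :\ x) (D - s.-1))); last by rewrite sum_nat_const cex mulnC.
  apply: leq_sum => y.
  rewrite inE => /andP[_ ye]; have := hy y ye; have := hdeg_pos eE ye; lia.
have : s.-1 <= D by nia.
lia.
Qed.

Lemma maxdeg_sub (V : finType) (E E' : {set {set V}}) :
  E' \subset E -> sec2_maxdeg E' <= sec2_maxdeg E.
Proof.
move=> sub; apply/bigmax_leqP => y _.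
apply: leq_trans (_ : #|sec2_nbhd E y| <= _); last first.
  by rewrite /sec2_maxdeg (bigD1 y) //= leq_maxl.
apply: subset_leq_card; apply/subsetP => z; rewrite !inE => /andP[-> /existsP[f /and3P[fE yf zf]]].
by apply/existsP; exists f; rewrite (subsetP sub f fE) yf zf.
Qed.

Definition cond (V : finType) (E : {set {set V}}) :=
  forall e, e \in E -> exists2 x, x \in e & hdeg E x <= #|e|.

Lemma col_ind (V : finType) n : forall (E : {set {set V}}) k,
  #|E| <= n -> linear E -> cond E -> sec2_maxdeg E < k -> colorableb E k.
Proof.
elim: n => [|n IH] E k hE lin cnd hk.
  have k0 : 0 < k by lia.
  apply/existsP; exists [ffun=> Ordinal k0]; apply/forall_inP => e eE.
  by move: hE; rewrite leqn0 cards_eq0 => /eqP E0; rewrite E0 inE in eE.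
case: (set_0Vmem E) => [E0|[e0 e0E]].
  have k0 : 0 < k by lia.
  by apply/existsP; exists [ffun=> Ordinal k0]; apply/forall_inP => e; rewrite E0 inE.
case: (arg_minnP (fun f : {set V} => #|f|) e0E) => e eE emin.
set E' := E :\ e.
have sub : E' \subset E by apply: subsetDl.
have hE' : #|E'| <= n by move: hE; rewrite (cardsD1 e E) (eE : e \in E).
have lin' : linear E'.
  by move=> f f' fE f'E; apply: lin; apply: (subsetP sub).
have cnd' : cond E'.
  move=> f fE; have [x xf hx] := cnd f (subsetP sub f fE); exists x => //.
  apply: leq_trans hx; apply: subset_leq_card; apply/subsetP => g.
  by rewrite !inE => /andP[/andP[_ gE] ->]; rewrite gE.
have hk' : sec2_maxdeg E' < k by apply: leq_ltn_trans (maxdeg_sub sub) hk.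
move: (IH E' k hE' lin' cnd' hk') => /existsP[c' /forall_inP Hc].
have Hc2 f f' : f \in E' -> f' \in E' -> f != f' -> f :&: f' != set0 -> c' f != c' f'.
  move=> fE f'E ne nz.
  by move: (Hc f fE) => /forall_inP /(_ f' f'E) /implyP /(_ ne) /implyP /(_ nz).
set Nb := [set f in E | (f != e) && (f :&: e != set0)].
have [x xe hx] := cnd e eE.
have hNb : #|Nb| < k by apply: leq_ltn_trans (key_bound lin eE emin xe hx) hk.
set U := [set c' f | f in Nb].
have [col colU] : exists col, col \notin U.
  case: (pickP (fun c => c \notin U)) => [col h|h]; first by exists col.
  have : #|'I_k| <= #|U|.
    by apply: subset_leq_card; apply/subsetP => c _; move: (h c) => /negbFE.
  rewrite card_ord => hU; have := leq_imset_card c' Nb; rewrite -/U; move=> hUN; exfalso; have := leq_trans hU hUN; by rewrite leqNgt hNb.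
apply/existsP; exists [ffun f => if f == e then col else c' f].
apply/forall_inP => f fE; apply/forall_inP => f' f'E.
apply/implyP => ne; apply/implyP => nz; rewrite !ffunE.
case: (eqVneq f e) => [fe|fe]; case: (eqVneq f' e) => [f'e|f'e].
- by rewrite fe f'e eqxx in ne.
- apply: contraNneq colU => ->; apply: imset_f.
  by rewrite inE f'E f'e /= setIC -fe.
- apply: contraNneq colU => <-; apply: imset_f.
  by rewrite inE fE fe /= -f'e.
- by apply: Hc2 => //; rewrite /E' !inE ?fe ?f'e ?fE ?f'E.
Qed.

Theorem theorem1p5 (V : finType) (E : {set {set V}}) :
  hypergraph E ->
  linear E ->
  (forall e, e \in E -> exists2 x, x \in e & hdeg E x <= #|e|) ->
  chromatic_index E <= sec2_maxdeg E + 1.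
Proof.
move=> _ lin cnd; rewrite /chromatic_index; case: ex_minnP => m _ H.
apply: H; apply: (@col_ind V #|E|) => //; lia.
Qed.
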